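(* Let $\pi$ be irreducible combinatorial data, $w\in\mathbb R^{\mathcal A}$, and let $\underline\gamma^*$ be a finite path in the Rauzy diagram starting at $\pi$. There exists an affine interval exchange map with data $\pi$ and slope vector $\exp w$ such that the first steps of its Rauzy–Veech algorithm are defined and follow the path $\underline\gamma^*$ if and only if there exists $\lambda$ with $\lambda_\alpha>0$ for all $\alpha$ and $\sum_\alpha\lambda_\alpha w_\alpha=0$ such that the first steps of the Rauzy–Veech algorithm of the standard i.e.m. $T_{\pi,\lambda}$ are defined and follow $\underline\gamma^*$.
   Context: Affine i.e.m. with data $\pi$: map on an interval $I$ sending each interval $I^t_\alpha$ of a partition ordered by $\pi_t$ increasingly and affinely onto the interval $I^b_\alpha$ of a partition ordered by $\pi_b$; slope vector $\exp w$ means $|I^b_\alpha|=e^{w_\alpha}|I^t_\alpha|$. Standard i.e.m. $T_{\pi,\lambda}$: the case $|I^t_\alpha|=|I^b_\alpha|=\lambda_\alpha$ (a translation on each piece). Rauzy–Veech step: let $\pi_t(\alpha_t)=\pi_b(\alpha_b)=d$ and let $u^t_{d-1},u^b_{d-1}$ be the left endpoints of $I^t_{\alpha_t}$, $I^b_{\alpha_b}$; if they differ, replace the map by its first return map to $(0,\max(u^t_{d-1},u^b_{d-1}))$, which is again an (affine) i.e.m. with data $R_t(\pi)$ if $u^t_{d-1}<u^b_{d-1}$ (top type: $\pi_t$ unchanged, $\alpha_b$ moved in the bottom line to just after $\alpha_t$) or $R_b(\pi)$ if $u^b_{d-1}<u^t_{d-1}$ (bottom type, symmetric). The arrows $\pi\to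 R_t(\pi)$, $\pi\to R_b(\pi)$ form the Rauzy diagram, and the successive steps define a path in it. *)

(* Defs.v *)
From Stdlib Require Import Reals List Arith Permutation.
Import ListNotations.
Open Scope R_scope.

(* Alphabet A = {0, ..., d-1}.  Combinatorial data pi = (pi_t, pi_b) is given
   by the top and bottom lines: [pt] lists the letters in the order pi_t
   (pt[i] is the letter at position i+1 of the top line), similarly [pb]. *)

Definition sumA (d : nat) (f : nat -> R) : R :=
  fold_right Rplus 0 (map f (seq 0 d)).

Definition irreducible (d : nat) (pt pb : list nat) : Prop :=
  forall k : nat, (0 < k)%nat -> (k < d)%nat ->
    ~ (forall a : nat, In a (firstn k pt) <-> In a (firstn k pb)).

(* Data of an affine i.e.m.: combinatorial data and the lengths of the top
   intervals I^t_alpha ([lt]) and bottom intervals I^b_alpha ([lb]).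
   The interval I is (0, sum of lengths); the map sends I^t_alpha affinely
   and increasingly onto I^b_alpha. *)
Record aiem := Aiem { a_pt : list nat; a_pb : list nat;
                      a_lt : nat -> R; a_lb : nat -> R }.

Definition is_affine_iem (d : nat) (pt pb : list nat) (w : nat -> R)
  (T : aiem) : Prop :=
  a_pt T = pt /\ a_pb T = pb /\
  (forall a, (a < d)%nat -> 0 < a_lt T a) /\
  (forall a, (a < d)%nat -> a_lb T a = exp (w a) * a_lt T a) /\
  sumA d (a_lt T) = sumA d (a_lb T).

Definition std_iem (pt pb : list nat) (lam : nat -> R) : aiem :=
  Aiem pt pb lam lam.

Definition move_after (x y : nat) (l : list nat) : list nat :=
  flat_map (fun z => if Nat.eqb z y then [z; x] else [z])
           (filter (fun z => negb (Nat.eqb z x)) l).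

Definition upd (f : nat -> R) (a : nat) (v : R) : nat -> R :=
  fun b => if Nat.eqb b a then v else f b.

Inductive rv_type := TopType | BotType.

(* With alpha_t, alpha_b the last letters of the top
   and bottom lines, u^t_{d-1} = |I| - lt alpha_t and u^b_{d-1} = |I| - lb alpha_b.
   - top type (u^t < u^b, i.e. lb alpha_b < lt alpha_t): first return map to
     (0, u^b_{d-1}); I^t_{alpha_t} is shortened by |I^b_{alpha_b}|, and the old
     I^b_{alpha_t} is split into the new I^b_{alpha_t} (image of the shortened
     piece) followed by the new I^b_{alpha_b} (image of I^b_{alpha_b} by the
     alpha_t branch);
   - bottom type (symmetric);
   - equality: the step is not defined. *)
Definition rv_step (T : aiem) : option (rv_type * aiem) :=
  let pt := a_pt T in let pb := a_pb T in
  let lt := a_lt T in let lb := a_lb T in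
  let at_ := last pt 0%nat in let ab := last pb 0%nat in
  if Rlt_dec (lb ab) (lt at_) then
    Some (TopType,
      Aiem pt (move_after ab at_ pb)
        (upd lt at_ (lt at_ - lb ab))
        (upd (upd lb ab (lb ab * lb at_ / lt at_))
             at_ ((lt at_ - lb ab) * lb at_ / lt at_)))
  else if Rlt_dec (lt at_) (lb ab) then
    Some (BotType,
      Aiem (move_after at_ ab pt) pb
        (upd (upd lt at_ (lt at_ * lt ab / lb ab))
             ab ((lb ab - lt at_) * lt ab / lb ab))
        (upd lb ab (lb ab - lt at_)))
  else None.

(* A finite path in the Rauzy diagram starting at the data of T is a finite
   sequence of arrows, each determined by its type (R_t or R_b).
   [follows T gam]: the first |gam| steps of the Rauzy-Veech algorithm of T
   are defined and follow gam. *)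
Fixpoint follows (T : aiem) (gam : list rv_type) : Prop :=
  match gam with
  | [] => True
  | g :: gam' =>
      exists T', rv_step T = Some (g, T') /\ follows T' gam'
  end.

(* Main.v *)
Require Import Defs.
From Stdlib Require Import Reals List Arith Permutation Lra Lia Classical FunctionalExtensionality.
Import ListNotations.
Open Scope R_scope.

Lemma fold_plus_acc (l : list R) (x : R) :
  fold_right Rplus x l = fold_right Rplus 0 l + x.
Proof. induction l; simpl; [lra|rewrite IHl; lra]. Qed.

Lemma sumA_S d f : sumA (S d) f = sumA d f + f d.
Proof.
  unfold sumA. rewrite seq_S, map_app, fold_right_app. simpl.
  rewrite fold_plus_acc. lra.
Qed.

Lemma sumA_0 f : sumA 0 f = 0.
Proof. reflexivity. Qed.

Lemma sumA_ext d f g : (forall a, (a < d)%nat -> f a = g a) -> sumA d f = sumA d g.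
Proof.
  induction d; intros H; [reflexivity|].
  rewrite !sumA_S, IHd, H; [reflexivity|lia|intros; apply H; lia].
Qed.

Lemma upd_same f a v : upd f a v a = v.
Proof. unfold upd. rewrite Nat.eqb_refl. reflexivity. Qed.

Lemma upd_other f a v b : b <> a -> upd f a v b = f b.
Proof. intros H. unfold upd. apply Nat.eqb_neq in H. rewrite H. reflexivity. Qed.

Lemma sumA_upd d f a v : (a < d)%nat -> sumA d (upd f a v) = sumA d f - f a + v.
Proof.
  induction d; intros Ha; [lia|].
  rewrite !sumA_S.
  destruct (Nat.eq_dec a d) as [->|Hne].
  - rewrite upd_same. rewrite (sumA_ext d (upd f d v) f); [lra|].
    intros b Hb. apply upd_other. lia.
  - rewrite IHd by lia. rewrite upd_other by lia. lra.
Qed.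

Lemma sumA_minus d f g : sumA d (fun a => f a - g a) = sumA d f - sumA d g.
Proof. induction d; [simpl; unfold sumA; simpl; lra|rewrite !sumA_S, IHd; lra]. Qed.

Lemma sumA_nonpos d f : (forall a, (a < d)%nat -> f a <= 0) -> sumA d f <= 0.
Proof. induction d; intros H; [unfold sumA; simpl; lra|].
  rewrite sumA_S. assert (f d <= 0) by (apply H; lia).
  assert (sumA d f <= 0) by (apply IHd; intros; apply H; lia). lra. Qed.

Lemma sumA_nonpos_zero d f : (forall a, (a < d)%nat -> f a <= 0) -> sumA d f = 0 ->
  forall a, (a < d)%nat -> f a = 0.
Proof. induction d; intros H Hs a Ha; [lia|].
  rewrite sumA_S in Hs. assert (f d <= 0) by (apply H; lia).
  assert (sumA d f <= 0) by (apply sumA_nonpos; intros; apply H; lia).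
  destruct (Nat.eq_dec a d) as [->|]; [lra|].
  apply IHd; [intros; apply H; lia|lra|lia]. Qed.

Lemma sumA_zero d : sumA d (fun _ => 0) = 0.
Proof. induction d; [reflexivity|rewrite sumA_S, IHd; lra]. Qed.

Definition Sg (d : nat) (c : nat -> R) : Prop :=
  (forall a, (a < d)%nat -> c a = 0) \/
  ((exists a, (a < d)%nat /\ 0 < c a) /\ (exists b, (b < d)%nat /\ c b < 0)).

Lemma L1 d lam c : (forall a, (a < d)%nat -> 0 < lam a) ->
  sumA d (fun a => lam a * c a) = 0 -> Sg d c.
Proof.
  intros Hl Hs.
  destruct (classic (exists a, (a < d)%nat /\ 0 < c a)) as [Hp|Hp];
  destruct (classic (exists b, (b < d)%nat /\ c b < 0)) as [Hn|Hn].
  - right; auto.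
  - left. intros a Ha.
    assert (H0 : forall a, (a < d)%nat -> (fun a => - (lam a * c a)) a <= 0).
    { intros x Hx. simpl. assert (0 <= c x).
      { destruct (Rle_or_lt 0 (c x)); auto. exfalso; apply Hn; eauto. }
      specialize (Hl x Hx). nra. }
    assert (Hs' : sumA d (fun a => - (lam a * c a)) = 0).
    { rewrite (sumA_ext d _ (fun a => 0 - lam a * c a)) by (intros; lra).
      rewrite sumA_minus, Hs. rewrite sumA_zero. lra. }
    pose proof (sumA_nonpos_zero d _ H0 Hs' a Ha). simpl in H. specialize (Hl a Ha). nra.
  - left. intros a Ha.
    assert (H0 : forall a, (a < d)%nat -> (fun a => lam a * c a) a <= 0).
    { intros x Hx. simpl. assert (c x <= 0).
      { destruct (Rle_or_lt (c x) 0); auto. exfalso; apply Hp; eauto. }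
      specialize (Hl x Hx). nra. }
    pose proof (sumA_nonpos_zero d _ H0 Hs a Ha). simpl in H. specialize (Hl a Ha). nra.
  - left. intros a Ha.
    destruct (Rtotal_order (c a) 0) as [H|[H|H]]; auto.
    + exfalso; apply Hn; eauto.
    + exfalso; apply Hp; eauto.
Qed.


Lemma L2 d c : Sg d c -> exists lam, (forall a, 0 < lam a) /\ sumA d (fun a => lam a * c a) = 0.
Proof.
  intros [H|[[a [Ha Hca]] [b [Hb Hcb]]]].
  - exists (fun _ => 1). split; [intros; lra|].
    rewrite (sumA_ext d _ (fun _ => 0)); [apply sumA_zero|]. intros x Hx. rewrite H; auto; lra.
  - set (S := sumA d c).
    assert (Hk : exists k, (k < d)%nat /\ c k <> 0 /\ 0 <= S * / (- c k)).
    { destruct (Rle_or_lt 0 S).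
      - exists b. repeat split; auto; try lra.
        apply Rmult_le_pos; auto. left; apply Rinv_0_lt_compat; lra.
      - exists a. repeat split; auto; try lra.
        assert (/ (- c a) < 0). { apply Rinv_lt_0_compat. lra. } nra. }
    destruct Hk as [k [Hk [Hck HS]]].
    exists (upd (fun _ => 1) k (1 + S * / (- c k))). split.
    + intros x. unfold upd. destruct (Nat.eqb x k); lra.
    + rewrite (sumA_ext d _ (upd c k ((1 + S * / (- c k)) * c k))).
      * rewrite sumA_upd by auto. fold S. field. auto.
      * intros x Hx. unfold upd. destruct (Nat.eqb_spec x k); [subst; reflexivity|ring].
Qed.

Lemma exp_sgn x : (0 < x <-> 0 < exp x - 1) /\ (x < 0 <-> exp x - 1 < 0) /\ (x = 0 <-> exp x - 1 = 0).
Proof.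
  destruct (Rtotal_order x 0) as [H|[H|H]].
  - pose proof (exp_increasing _ _ H). rewrite exp_0 in H0.
    repeat split; intros; lra.
  - subst. rewrite exp_0. repeat split; intros; lra.
  - pose proof (exp_increasing _ _ H). rewrite exp_0 in H0.
    repeat split; intros; lra.
Qed.

Lemma L3a d u : Sg d u -> Sg d (fun a => exp (u a) - 1).
Proof.
  intros [H|[[a [Ha Hp]] [b [Hb Hn]]]].
  - left. intros a Ha. destruct (exp_sgn (u a)) as [_ [_ E]]. apply E. auto.
  - right. split; [exists a|exists b]; split; auto.
    + destruct (exp_sgn (u a)) as [E _]. apply E. auto.
    + destruct (exp_sgn (u b)) as [_ [E _]]. apply E. auto.
Qed.

Lemma L3b d u : Sg d (fun a => exp (u a) - 1) -> Sg d u.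
Proof.
  intros [H|[[a [Ha Hp]] [b [Hb Hn]]]].
  - left. intros a Ha. destruct (exp_sgn (u a)) as [_ [_ E]]. apply E. auto.
  - right. split; [exists a|exists b]; split; auto.
    + destruct (exp_sgn (u a)) as [E _]. apply E. auto.
    + destruct (exp_sgn (u b)) as [_ [E _]]. apply E. auto.
Qed.

Definition Fm (x y : nat) := fun z : nat => if Nat.eqb z y then [z; x] else [z].

Lemma flat_map_notin x y l : ~ In y l -> flat_map (Fm x y) l = l.
Proof.
  induction l as [|z l IH]; intros H; simpl; [reflexivity|].
  unfold Fm at 1. destruct (Nat.eqb_spec z y).
  - exfalso; apply H; left; auto.
  - simpl. rewrite IH; auto. intro; apply H; right; auto.
Qed.

Lemma flat_map_perm x y l : NoDup l -> In y l -> Permutation (flat_map (Fm x y) l) (x :: l).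
Proof.
  induction l as [|z l IH]; intros Hn Hy; [destruct Hy|].
  inversion Hn; subst. simpl. unfold Fm at 1. destruct (Nat.eqb_spec z y).
  - subst. rewrite flat_map_notin by auto. simpl. apply perm_swap.
  - destruct Hy as [Hy|Hy]; [congruence|]. simpl.
    eapply perm_trans; [apply perm_skip; apply IH; auto|]. apply perm_swap.
Qed.

Lemma filter_notin x r : ~ In x r -> filter (fun z => negb (Nat.eqb z x)) r = r.
Proof.
  induction r as [|z r IH]; intros H; simpl; [reflexivity|].
  destruct (Nat.eqb_spec z x); [exfalso; apply H; left; auto|].
  simpl. rewrite IH; auto. intro; apply H; right; auto.
Qed.

Lemma filter_perm x l : NoDup l -> In x l -> Permutation l (x :: filter (fun z => negb (Nat.eqb z x)) l).
Proof.
  induction l as [|z l IH]; intros Hn Hx; [destruct Hx|].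
  inversion Hn; subst. simpl. destruct (Nat.eqb_spec z x).
  - subst. simpl. rewrite filter_notin by auto. reflexivity.
  - destruct Hx as [Hx|Hx]; [congruence|]. simpl.
    eapply perm_trans; [apply perm_skip; apply IH; auto|]. apply perm_swap.
Qed.

Lemma move_after_perm x y l : NoDup l -> In x l -> In y l -> x <> y ->
  Permutation (move_after x y l) l.
Proof.
  intros Hn Hx Hy Hxy. unfold move_after. change (fun z => if Nat.eqb z y then [z; x] else [z]) with (Fm x y).
  eapply perm_trans; [apply flat_map_perm|].
  - apply NoDup_filter; auto.
  - apply filter_In. split; auto. destruct (Nat.eqb_spec y x); auto.
  - symmetry. apply filter_perm; auto.
Qed.

Lemma move_after_last y l : NoDup l -> l <> [] -> In y l -> y <> last l 0%nat ->
  last (move_after (last l 0%nat) y l) 0%nat <> y.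
Proof.
  intros Hn Hne Hy Hyl.
  destruct (exists_last Hne) as [l0 [x E]]. subst l.
  rewrite last_last in *.
  assert (Hx : ~ In x l0).
  { intro H. apply (NoDup_remove_2 l0 [] x Hn). rewrite app_nil_r; auto. }
  unfold move_after. rewrite filter_app. rewrite filter_notin by auto.
  simpl. rewrite Nat.eqb_refl. simpl. rewrite app_nil_r.
  change (fun z => if Nat.eqb z y then [z; x] else [z]) with (Fm x y).
  apply in_app_or in Hy. destruct Hy as [Hy|[Hy|[]]]; [|congruence].
  assert (Hne0 : l0 <> []) by (intro; subst; destruct Hy).
  destruct (exists_last Hne0) as [l1 [c E]]. subst l0.
  rewrite flat_map_app. simpl. unfold Fm at 2. destruct (Nat.eqb_spec c y).
  - replace (flat_map (Fm x y) l1 ++ [c; x] ++ []) with ((flat_map (Fm x y) l1 ++ [c]) ++ [x])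
      by (rewrite <- app_assoc; reflexivity).
    rewrite last_last. intro; subst; apply Hx. apply in_or_app; right; left; auto.
  - rewrite app_nil_r, last_last. auto.
Qed.

Lemma last_in (l : list nat) : l <> [] -> In (last l 0%nat) l.
Proof.
  intros Hne. destruct (exists_last Hne) as [l0 [x E]]. subst.
  rewrite last_last. apply in_or_app; right; left; auto.
Qed.

Definition Inv d pt pb := Permutation pt (seq 0 d) /\ Permutation pb (seq 0 d) /\
  last pt 0%nat <> last pb 0%nat.

Lemma Inv_ne d pt pb : Inv d pt pb -> pt <> [] /\ pb <> [].
Proof.
  intros [H1 [H2 H3]]. split; intro; subst.
  - apply Permutation_nil in H1. destruct d; [|discriminate].
    simpl in H2. apply Permutation_sym, Permutation_nil in H2. subst. apply H3; reflexivity.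
  - apply Permutation_nil in H2. destruct d; [|discriminate].
    simpl in H1. apply Permutation_sym, Permutation_nil in H1. subst. apply H3; reflexivity.
Qed.

Lemma Inv_lt d pt pb : Inv d pt pb -> (last pt 0 < d)%nat /\ (last pb 0 < d)%nat.
Proof.
  intros HI. destruct (Inv_ne _ _ _ HI) as [N1 N2]. destruct HI as [H1 [H2 H3]].
  split.
  - assert (In (last pt 0%nat) (seq 0 d)) by (apply (Permutation_in _ H1); apply last_in; auto).
    apply in_seq in H. lia.
  - assert (In (last pb 0%nat) (seq 0 d)) by (apply (Permutation_in _ H2); apply last_in; auto).
    apply in_seq in H. lia.
Qed.

Definition nxt_pt g (pt pb : list nat) := match g with TopType => pt
  | BotType => move_after (last pt 0%nat) (last pb 0%nat) pt end.
Definition nxt_pb g (pt pb : list nat) := match g with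
  | TopType => move_after (last pb 0%nat) (last pt 0%nat) pb | BotType => pb end.
Definition nxt_v g (pt pb : list nat) (v : nat -> R) := match g with
  | TopType => upd v (last pb 0%nat) (v (last pb 0%nat) + v (last pt 0%nat))
  | BotType => upd v (last pt 0%nat) (v (last pt 0%nat) + v (last pb 0%nat)) end.
Fixpoint fin (gam : list rv_type) pt pb v : nat -> R := match gam with
  | [] => v
  | g :: gam' => fin gam' (nxt_pt g pt pb) (nxt_pb g pt pb) (nxt_v g pt pb v) end.

Lemma Inv_step d g pt pb : Inv d pt pb -> Inv d (nxt_pt g pt pb) (nxt_pb g pt pb).
Proof.
  intros HI. destruct (Inv_ne _ _ _ HI) as [N1 N2]. pose proof (Inv_lt _ _ _ HI) as [L1 L2].
  destruct HI as [H1 [H2 H3]].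
  assert (ND1 : NoDup pt) by (eapply Permutation_NoDup; [symmetry; eauto|apply seq_NoDup]).
  assert (ND2 : NoDup pb) by (eapply Permutation_NoDup; [symmetry; eauto|apply seq_NoDup]).
  assert (Ia : forall l, Permutation l (seq 0 d) -> forall x, (x < d)%nat -> In x l).
  { intros l Hl x Hx. eapply Permutation_in; [symmetry; eauto|]. apply in_seq. lia. }
  destruct g; simpl.
  - split; [auto|split].
    + eapply perm_trans; [|exact H2]. apply move_after_perm; auto.
    + intro E. symmetry in E. revert E. apply (move_after_last (last pt 0%nat) pb); auto.
  - split; [|split; auto].
    + eapply perm_trans; [|exact H1]. apply move_after_perm; auto.
    + apply (move_after_last (last pb 0%nat) pt); auto.
Qed.

Lemma sum_top d (phi : R -> R) (s u lt : nat -> R) L at_ ab :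
  (at_ < d)%nat -> (ab < d)%nat -> at_ <> ab -> L = exp (s ab) * lt ab ->
  exp (s ab) * phi (u at_) = phi (u ab + u at_) - phi (u ab) ->
  sumA d (fun a => upd lt at_ (lt at_ - L) a * phi (upd u ab (u ab + u at_) a))
  = sumA d (fun a => lt a * phi (u a)).
Proof.
  intros H1 H2 H3 HL HG.
  rewrite (sumA_ext d _ (upd (upd (fun a => lt a * phi (u a)) at_ ((lt at_ - L) * phi (u at_)))
     ab (lt ab * phi (u ab + u at_)))).
  - rewrite sumA_upd by auto. rewrite sumA_upd by auto.
    rewrite upd_other by auto.
    replace (phi (u ab + u at_)) with (exp (s ab) * phi (u at_) + phi (u ab)) by lra.
    subst L. ring.
  - intros b Hb. unfold upd.
    destruct (Nat.eqb_spec b ab); destruct (Nat.eqb_spec b at_); subst; try congruence; reflexivity.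
Qed.

Lemma sum_bot d (phi : R -> R) (s u lt : nat -> R) L at_ ab :
  (at_ < d)%nat -> (ab < d)%nat -> at_ <> ab -> L = exp (s ab) * lt ab -> 0 < lt ab ->
  exp (s ab) * phi (u at_) = phi (u ab + u at_) - phi (u ab) ->
  sumA d (fun a => upd (upd lt at_ (lt at_ * lt ab / L)) ab ((L - lt at_) * lt ab / L) a
     * phi (upd u at_ (u at_ + u ab) a))
  = sumA d (fun a => lt a * phi (u a)).
Proof.
  intros H1 H2 H3 HL Hp HG.
  rewrite (sumA_ext d _ (upd (upd (fun a => lt a * phi (u a)) at_ (lt at_ * lt ab / L * phi (u at_ + u ab)))
     ab ((L - lt at_) * lt ab / L * phi (u ab)))).
  - rewrite sumA_upd by auto. rewrite sumA_upd by auto.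
    rewrite upd_other by auto.
    rewrite (Rplus_comm (u at_) (u ab)).
    replace (phi (u ab + u at_)) with (exp (s ab) * phi (u at_) + phi (u ab)) by lra.
    subst L. pose proof (exp_pos (s ab)). field. split; lra.
  - intros b Hb. unfold upd.
    destruct (Nat.eqb_spec b ab); destruct (Nat.eqb_spec b at_); subst; try congruence; reflexivity.
Qed.

Section Gen.
Variable d : nat.
Variable phi : R -> R.
Variable Good : (nat -> R) -> (nat -> R) -> Prop.
Hypothesis HG1 : forall s u, Good s u -> forall a b, exp (s b) * phi (u a) = phi (u b + u a) - phi (u b).
Hypothesis HG2 : forall s u x y, Good s u -> Good (upd s x (s x + s y)) (upd u x (u x + u y)).

Lemma Good_nxt g pt pb s u : Good s u -> Good (nxt_v g pt pb s) (nxt_v g pt pb u).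
Proof. destruct g; simpl; apply HG2. Qed.

Lemma forward gam : forall T s u, Inv d (a_pt T) (a_pb T) -> Good s u ->
  (forall a, (a < d)%nat -> 0 < a_lt T a) ->
  (forall a, (a < d)%nat -> a_lb T a = exp (s a) * a_lt T a) ->
  sumA d (fun a => a_lt T a * phi (u a)) = 0 -> follows T gam ->
  exists lt', (forall a, (a < d)%nat -> 0 < lt' a) /\
    sumA d (fun a => lt' a * phi (fin gam (a_pt T) (a_pb T) u a)) = 0.
Proof.
  induction gam as [|g gam IH]; intros T s u HI HG Hp Hl Hs Hf.
  - exists (a_lt T). auto.
  - destruct T as [pt pb lt lb]. simpl in *.
    destruct Hf as [T' [Hst Hf]].
    pose proof (Inv_lt _ _ _ HI) as [L1 L2].
    pose proof HI as [_ [_ Hne]].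
    unfold rv_step in Hst. simpl in Hst.
    set (at_ := last pt 0%nat) in *. set (ab := last pb 0%nat) in *.
    destruct (Rlt_dec (lb ab) (lt at_)) as [Hlt|Hlt].
    + injection Hst as <- <-.
      refine (IH _ (nxt_v TopType pt pb s) (nxt_v TopType pt pb u) _ _ _ _ _ Hf); simpl.
      * apply (Inv_step d TopType pt pb HI).
      * apply HG2; auto.
      * intros a Ha. unfold upd. destruct (Nat.eqb a at_); auto. lra.
      * intros a Ha. fold at_ ab. unfold upd.
        destruct (Nat.eqb_spec a at_); destruct (Nat.eqb_spec a ab); subst; try congruence.
        -- rewrite (Hl at_) by auto. pose proof (Hp at_ L1). field. lra.
        -- rewrite exp_plus. rewrite !Hl by auto. pose proof (Hp at_ L1). field. lra.
        -- auto.
      * fold at_ ab. rewrite (sum_top d phi s u lt (lb ab) at_ ab); auto.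
    + destruct (Rlt_dec (lt at_) (lb ab)) as [Hlt2|Hlt2]; [|discriminate].
      injection Hst as <- <-.
      assert (Hab : 0 < lt ab) by auto.
      assert (Hat : 0 < lt at_) by auto.
      assert (HL : lb ab = exp (s ab) * lt ab) by auto.
      pose proof (exp_pos (s ab)).
      refine (IH _ (nxt_v BotType pt pb s) (nxt_v BotType pt pb u) _ _ _ _ _ Hf); simpl.
      * apply (Inv_step d BotType pt pb HI).
      * apply HG2; auto.
      * intros a Ha. unfold upd.
        destruct (Nat.eqb_spec a ab); destruct (Nat.eqb_spec a at_); subst; try congruence.
        -- apply Rmult_lt_0_compat; [|apply Rinv_0_lt_compat; lra].
           apply Rmult_lt_0_compat; lra.
        -- apply Rmult_lt_0_compat; [|apply Rinv_0_lt_compat; lra].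
           apply Rmult_lt_0_compat; lra.
        -- auto.
      * intros a Ha. fold at_ ab. unfold upd.
        destruct (Nat.eqb_spec a ab); destruct (Nat.eqb_spec a at_); subst; try congruence.
        -- rewrite HL. field. lra.
        -- rewrite exp_plus. rewrite Hl by auto. rewrite HL. field. lra.
        -- auto.
      * fold at_ ab. rewrite (sum_bot d phi s u lt (lb ab) at_ ab); auto.
Qed.

Lemma backward gam : forall pt pb s u lam', Inv d pt pb -> Good s u ->
  (forall a, 0 < lam' a) ->
  sumA d (fun a => lam' a * phi (fin gam pt pb u a)) = 0 ->
  exists lt, (forall a, 0 < lt a) /\ sumA d (fun a => lt a * phi (u a)) = 0 /\
    follows (Aiem pt pb lt (fun a => exp (s a) * lt a)) gam.
Proof.
  induction gam as [|g gam IH]; intros pt pb s u lam' HI HG Hpos Hsum.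
  - exists lam'. simpl in Hsum. repeat split; auto.
  - destruct (IH (nxt_pt g pt pb) (nxt_pb g pt pb) (nxt_v g pt pb s) (nxt_v g pt pb u) lam'
      (Inv_step d g pt pb HI) (Good_nxt g pt pb s u HG) Hpos Hsum) as [lt1 [Hp1 [Hs1 Hf1]]].
    pose proof (Inv_lt _ _ _ HI) as [L1 L2].
    pose proof HI as [_ [_ Hne]].
    destruct g.
    + set (lt := upd lt1 (last pt 0%nat) (lt1 (last pt 0%nat) + exp (s (last pb 0%nat)) * lt1 (last pb 0%nat))).
      exists lt.
      set (at_ := last pt 0%nat) in *. set (ab := last pb 0%nat) in *.
      assert (Eab : lt ab = lt1 ab) by (apply upd_other; auto).
      assert (Eat : lt at_ = lt1 at_ + exp (s ab) * lt1 ab) by (apply upd_same).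
      pose proof (exp_pos (s ab)). pose proof (Hp1 ab). pose proof (Hp1 at_).
      assert (E1 : lt1 = upd lt at_ (lt at_ - exp (s ab) * lt ab)).
      { apply functional_extensionality. intro b.
        destruct (Nat.eqb_spec b at_).
        - subst. rewrite upd_same, Eat, Eab. lra.
        - rewrite upd_other by auto. unfold lt. rewrite upd_other; auto. }
      split; [|split].
      * intros a. unfold lt, upd. destruct (Nat.eqb a at_); auto.
        assert (0 < exp (s ab) * lt1 ab) by (apply Rmult_lt_0_compat; auto). lra.
      * rewrite E1 in Hs1. simpl in Hs1. fold at_ ab in Hs1.
        rewrite (sum_top d phi s u lt (exp (s ab) * lt ab) at_ ab) in Hs1; auto.
      * simpl. eexists. split; [|exact Hf1].
        unfold rv_step. simpl. fold at_ ab.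
        destruct (Rlt_dec (exp (s ab) * lt ab) (lt at_)) as [Hc|Hc].
        2:{ exfalso. apply Hc. rewrite Eab, Eat. lra. }
        assert (Hlt0 : 0 < lt at_) by (rewrite Eat; nra).
        f_equal. f_equal. f_equal.
        -- symmetry; exact E1.
        -- clearbody lt at_ ab. rewrite E1. apply functional_extensionality. intro b. unfold upd.
           repeat match goal with |- context [Nat.eqb ?x ?y] => destruct (Nat.eqb_spec x y); try subst; try congruence end.
           ++ field. lra.
           ++ rewrite exp_plus. field. lra.
    + set (lt := upd (upd lt1 (last pt 0%nat) (lt1 (last pt 0%nat) * exp (s (last pb 0%nat))))
                  (last pb 0%nat) (lt1 (last pb 0%nat) + lt1 (last pt 0%nat))).
      exists lt.
      set (at_ := last pt 0%nat) in *. set (ab := last pb 0%nat) in *.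
      assert (Eab : lt ab = lt1 ab + lt1 at_) by (apply upd_same).
      assert (Eat : lt at_ = lt1 at_ * exp (s ab)) by (unfold lt; rewrite upd_other, upd_same; auto).
      pose proof (exp_pos (s ab)). pose proof (Hp1 ab). pose proof (Hp1 at_).
      assert (E1 : lt1 = upd (upd lt at_ (lt at_ * lt ab / (exp (s ab) * lt ab))) ab
                 ((exp (s ab) * lt ab - lt at_) * lt ab / (exp (s ab) * lt ab))).
      { apply functional_extensionality. intro b. unfold upd.
        destruct (Nat.eqb_spec b ab); destruct (Nat.eqb_spec b at_); subst; try congruence.
        - rewrite Eat, Eab. field. lra.
        - rewrite Eat, Eab. field. lra.
        - unfold lt. rewrite !upd_other; auto. }
      split; [|split].
      * intros a. unfold lt, upd. destruct (Nat.eqb a ab); [lra|].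
        destruct (Nat.eqb a at_); auto. apply Rmult_lt_0_compat; auto.
      * rewrite E1 in Hs1. simpl in Hs1. fold at_ ab in Hs1.
        rewrite (sum_bot d phi s u lt (exp (s ab) * lt ab) at_ ab) in Hs1; auto.
        rewrite Eab; lra.
      * simpl. eexists. split; [|exact Hf1].
        unfold rv_step. simpl. fold at_ ab.
        destruct (Rlt_dec (exp (s ab) * lt ab) (lt at_)) as [Hc|Hc].
        { exfalso. rewrite Eab, Eat in Hc. nra. }
        destruct (Rlt_dec (lt at_) (exp (s ab) * lt ab)) as [Hc2|Hc2].
        2:{ exfalso. apply Hc2. rewrite Eab, Eat. nra. }
        assert (Hlt0 : 0 < lt ab) by (rewrite Eab; nra).
        f_equal. f_equal. f_equal.
        -- symmetry; exact E1.
        -- clearbody lt at_ ab. rewrite E1. apply functional_extensionality. intro b. unfold upd.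
           repeat match goal with |- context [Nat.eqb ?x ?y] => destruct (Nat.eqb_spec x y); try subst; try congruence end.
           all: try rewrite exp_plus.
           all: try (field; lra).
Qed.
End Gen.

Lemma firstn_in d l x : (1 <= d)%nat -> Permutation l (seq 0 d) ->
  (In x (firstn (d - 1) l) <-> ((x < d)%nat /\ x <> last l 0%nat)).
Proof.
  intros Hd Hl.
  assert (Hne : l <> []).
  { intro; subst. apply Permutation_nil in Hl. destruct d; [lia|discriminate]. }
  assert (ND : NoDup l) by (eapply Permutation_NoDup; [symmetry; eauto|apply seq_NoDup]).
  destruct (exists_last Hne) as [l0 [c E]]. subst l.
  assert (Hlen : length l0 = (d - 1)%nat).
  { apply Permutation_length in Hl. rewrite length_app, length_seq in Hl. simpl in Hl. lia. }
  rewrite <- Hlen, firstn_app, Nat.sub_diag, firstn_all. simpl. rewrite app_nil_r, last_last.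
  assert (Hc : ~ In c l0).
  { intro H. apply (NoDup_remove_2 l0 [] c ND). rewrite app_nil_r; auto. }
  split.
  - intros H. split.
    + assert (In x (seq 0 d)).
      { eapply Permutation_in; [exact Hl|]. apply in_or_app; auto. }
      apply in_seq in H0. lia.
    + intro; subst; auto.
  - intros [H1 H2]. assert (In x (l0 ++ [c])).
    { eapply Permutation_in; [symmetry; exact Hl|]. apply in_seq. lia. }
    apply in_app_or in H. destruct H as [H|[H|[]]]; auto. congruence.
Qed.

Lemma irr_Inv d pt pb : (2 <= d)%nat -> Permutation pt (seq 0 d) -> Permutation pb (seq 0 d) ->
  irreducible d pt pb -> Inv d pt pb.
Proof.
  intros Hd H1 H2 Hi. split; [auto|split; [auto|]].
  intro E. apply (Hi (d - 1)%nat); [lia|lia|].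
  intro x. rewrite (firstn_in d pt x), (firstn_in d pb x) by (auto; lia).
  rewrite E. tauto.
Qed.

Lemma HG1_aff : forall s u : nat -> R, s = u -> forall a b,
  exp (s b) * (fun x => exp x - 1) (u a) = (fun x => exp x - 1) (u b + u a) - (fun x => exp x - 1) (u b).
Proof. intros s u -> a b. simpl. rewrite exp_plus. ring. Qed.

Lemma HG2_aff : forall (s u : nat -> R) x y, s = u -> upd s x (s x + s y) = upd u x (u x + u y).
Proof. intros s u x y ->. reflexivity. Qed.

Lemma HG1_std : forall s u : nat -> R, (forall x, s x = 0) -> forall a b,
  exp (s b) * (fun x => x) (u a) = (fun x => x) (u b + u a) - (fun x => x) (u b).
Proof. intros s u H a b. rewrite H, exp_0. simpl. ring. Qed.

Lemma HG2_std : forall (s u : nat -> R) x y, (forall x, s x = 0) ->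
  (forall z, upd s x (s x + s y) z = 0).
Proof. intros s u x y H z. unfold upd. destruct (Nat.eqb z x); rewrite ?H; ring. Qed.

Lemma sumA_1 f : sumA 1 f = f 0%nat.
Proof. rewrite sumA_S, sumA_0. ring. Qed.

Lemma d1_nofollow T gam : a_pt T = [0%nat] -> a_pb T = [0%nat] -> a_lt T 0%nat = a_lb T 0%nat ->
  follows T gam -> gam = [].
Proof.
  intros E1 E2 E3 Hf. destruct gam as [|g gam]; auto.
  destruct Hf as [T' [Hs _]]. unfold rv_step in Hs. rewrite E1, E2 in Hs. simpl in Hs.
  rewrite E3 in Hs.
  destruct (Rlt_dec (a_lb T 0%nat) (a_lb T 0%nat)); [lra|].
  destruct (Rlt_dec (a_lb T 0%nat) (a_lb T 0%nat)); [lra|discriminate].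
Qed.

Theorem lemma2 (d : nat) (pt pb : list nat)
  (Hd : (1 <= d)%nat)
  (Hpt : Permutation pt (seq 0 d)) (Hpb : Permutation pb (seq 0 d))
  (Hirr : irreducible d pt pb)
  (w : nat -> R) (gam : list rv_type) :
  (exists T : aiem, is_affine_iem d pt pb w T /\ follows T gam)
  <->
  (exists lam : nat -> R,
      (forall a, (a < d)%nat -> 0 < lam a) /\
      sumA d (fun a => lam a * w a) = 0 /\
      follows (std_iem pt pb lam) gam).
Proof.
  destruct (Nat.eq_dec d 1) as [->|Hd2].
  - simpl in Hpt, Hpb.
    apply Permutation_sym, Permutation_length_1_inv in Hpt.
    apply Permutation_sym, Permutation_length_1_inv in Hpb. subst.
    split.
    + intros [T [[E1 [E2 [Hp [Hl Hbal]]]] Hf]].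
      rewrite !sumA_1 in Hbal. rewrite Hl in Hbal by lia.
      assert (Hw : w 0%nat = 0).
      { apply exp_inv. rewrite exp_0. specialize (Hp 0%nat ltac:(lia)).
        apply (Rmult_eq_reg_r (a_lt T 0%nat)); lra. }
      assert (gam = []).
      { apply (d1_nofollow T); auto. rewrite Hl, Hw, exp_0 by lia. ring. }
      subst. exists (fun _ => 1). split; [intros; lra|split; [rewrite sumA_1, Hw; ring|exact I]].
    + intros [lam [Hp [Hs Hf]]].
      rewrite sumA_1 in Hs. specialize (Hp 0%nat ltac:(lia)).
      assert (Hw : w 0%nat = 0) by (apply (Rmult_eq_reg_l (lam 0%nat)); lra).
      assert (gam = []) by (apply (d1_nofollow (std_iem [0%nat] [0%nat] lam)); auto).
      subst. exists (Aiem [0%nat] [0%nat] (fun _ => 1) (fun a => exp (w a) * 1)).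
      split; [|exact I].
      repeat split; simpl; auto.
      * intros; lra.
      * rewrite !sumA_1, Hw, exp_0. ring.
  - assert (HI : Inv d pt pb) by (apply irr_Inv; auto; lia).
    split.
    + intros [T [[E1 [E2 [Hp [Hl Hbal]]]] Hf]].
      destruct (forward d (fun x => exp x - 1) (fun s u => s = u) HG1_aff HG2_aff gam T w w)
        as [lt' [Hp' Hs']]; auto.
      * rewrite E1, E2; auto.
      * rewrite (sumA_ext d _ (fun a => a_lb T a - a_lt T a)).
        -- rewrite sumA_minus, Hbal. ring.
        -- intros a Ha. rewrite Hl by auto. ring.
      * rewrite E1, E2 in Hs'.
        apply L1 in Hs'; auto. apply L3b in Hs'. apply L2 in Hs' as [lam' [Hl' Hs'']].
        destruct (backward d (fun x => x) (fun s u => forall x, s x = 0) HG1_std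
                   (fun s u x y H => HG2_std s u x y H) gam pt pb (fun _ => 0) w lam')
          as [lt [Hlt [Hslt Hflt]]]; auto.
        exists lt. repeat split; auto.
        replace (std_iem pt pb lt) with (Aiem pt pb lt (fun a => exp ((fun _ : nat => 0) a) * lt a)); auto.
        unfold std_iem. f_equal. apply functional_extensionality; intro; rewrite exp_0; ring.
    + intros [lam [Hp [Hs Hf]]].
      destruct (forward d (fun x => x) (fun s u => forall x, s x = 0) HG1_std
                   (fun s u x y H => HG2_std s u x y H) gam (std_iem pt pb lam) (fun _ => 0) w)
        as [lt' [Hp' Hs']]; auto.
      * simpl. intros; rewrite exp_0; ring.
      * simpl in Hs'. apply L1 in Hs'; auto. apply L3a in Hs'. apply L2 in Hs' as [lam' [Hl' Hs'']].
        destruct (backward d (fun x => exp x - 1) (fun s u => s = u) HG1_aff HG2_aff gam pt pb w w lam')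
          as [lt [Hlt [Hslt Hflt]]]; auto.
        eexists. split; [|exact Hflt].
        repeat split; simpl; auto.
        assert (sumA d (fun a => exp (w a) * lt a) - sumA d lt = 0).
        { rewrite <- sumA_minus. rewrite <- Hslt. apply sumA_ext. intros; ring. }
        lra.
Qed.
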